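(* Let $\alpha_1,\beta_1\in\mathbb R$, $\mu_1\in\mathbb C$, and consider the equation $$ i\partial_t\phi+|\phi|^2\partial_{xx}\phi+\alpha_1\phi|\partial_x\phi|^2+\beta_1\overline{\phi}(\partial_x\phi)^2+\mu_1|\phi|^2\phi=0. \qquad (\ast)$$ Let $0<x_1<1$, $\delta>0$, and let $f\in L^\infty([0,\delta];C^{3,1}([-x_1,x_1]))$ be a solution of $(\ast)$ with $f_0=f(0,\cdot)$ satisfying $f_0(0)=0$ and $f_x(0,0)>0$ real, and assume $x_1$ is small enough that $$\Big(\sup_{x\in[-x_1,x_1]}|f_{xx}(0,x)|\Big)\,x_1<\frac{f_x(0,0)}{2}.$$ Set $M=\|f\|_{L^\infty([0,\delta];C^{3,1})}$. Then there is a constant $C>0$ (independent of $f$, $t$, $x$) such that for all $t\in[0,\delta]$ and $|x|\le x_1$, $$|f(t,x)|\le|f_0(x)|\exp(CM^2t)$$ and $$\big|\partial_t(|f(t,x)|^2)\big|\le CM\exp(CM^2\delta)\big(1+(f_x(0,0))^{-1}M\big)^3\big(|f_0(x)|^3+tM^3|f_0(x)|^2\big).$$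
   Context: $C^{3,1}([-x_1,x_1])$ denotes functions on $[-x_1,x_1]$ with Lipschitz third derivative. *)

(* Defs.v *)
From Stdlib Require Import Reals.
From Coquelicot Require Import Coquelicot.
Open Scope R_scope.

Definition has_deriv_within {V : NormedModule R_AbsRing}
  (a b : R) (g : R -> V) (x : R) (l : V) : Prop :=
  filterlim (fun y => scal (/ (y - x)) (minus (g y) (g x)))
    (within (fun y => a <= y <= b /\ y <> x) (locally x)) (locally l).

Definition NL (a1 b1 : R) (m1 : C) (phi phix phixx : C) : C :=
  (RtoC (Cmod phi ^ 2) * phixx
   + RtoC a1 * phi * RtoC (Cmod phix ^ 2)
   + RtoC b1 * Cconj phi * (phix * phix)
   + m1 * RtoC (Cmod phi ^ 2) * phi)%C.

(* Main.v *)
Require Import Defs.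
From Stdlib Require Import Reals Lra Psatz.
From Coquelicot Require Import Coquelicot.
Open Scope R_scope.

Definition rD (a b : R) (g : R -> R) (x l : R) : Prop :=
  forall eps, 0 < eps -> exists d, 0 < d /\ forall y, a <= y <= b -> y <> x ->
    Rabs (y - x) < d -> Rabs ((g y - g x) / (y - x) - l) < eps.

Lemma hdw_fst a b (g : R -> C) x l :
  @has_deriv_within (prod_NormedModule R_AbsRing R_NormedModule R_NormedModule) a b g x l ->
  rD a b (fun y => fst (g y)) x (fst l) /\ rD a b (fun y => snd (g y)) x (snd l).
Proof.
  intros H; split; intros eps Heps;
  destruct (H (ball l (mkposreal eps Heps)) (locally_ball _ _)) as [[e He] Hd];
  exists e; split; auto; intros y Hy Hyx Hye;
  destruct (Hd y Hye (conj Hy Hyx)) as [H1 H2];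
  [ clear H2; revert H1 | clear H1; revert H2 ];
  destruct (g y), (g x), l; simpl;
  unfold ball; simpl; unfold AbsRing_ball, abs, minus, plus, opp, mult, scal; simpl;
  unfold mult; simpl; intros HH; unfold Rdiv, Rminus; rewrite Rmult_comm; exact HH.
Qed.

Lemma rD_hdw a b g x l : rD a b g x l -> @has_deriv_within R_NormedModule a b g x l.
Proof.
  intros H P [[eps He] HP].
  destruct (H eps He) as [d [Hd Hy]].
  exists (mkposreal d Hd); intros y Hyb [Hy1 Hy2]. apply HP.
  unfold ball; simpl; unfold AbsRing_ball, abs, minus, plus, opp, mult, scal; simpl; unfold mult; simpl.
  replace (/ (y - x) * (g y + - g x)) with ((g y - g x)/(y-x)) by (unfold Rdiv; ring).
  apply Hy; auto.
Qed.

Lemma rD_cont a b g x l : rD a b g x l -> forall eps, 0 < eps -> exists d, 0 < d /\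
  forall y, a <= y <= b -> Rabs (y - x) < d -> Rabs (g y - g x) < eps.
Proof.
  intros H eps He. destruct (H 1 Rlt_0_1) as [d [Hd Hy]].
  assert (HL : 0 < Rabs l + 1) by (generalize (Rabs_pos l); lra).
  exists (Rmin d (eps / (Rabs l + 1))). split.
  { apply Rmin_pos; auto. apply Rdiv_lt_0_compat; auto. }
  intros y Hab Hyd. destruct (Req_dec y x) as [->|Hne].
  { replace (g x - g x) with 0 by ring. rewrite Rabs_R0. auto. }
  assert (Hy1 := Hy y Hab Hne (Rlt_le_trans _ _ _ Hyd (Rmin_l _ _))).
  assert (Hy2 := Rlt_le_trans _ _ _ Hyd (Rmin_r _ _)).
  assert (Hyx : y - x <> 0) by lra.
  replace (g y - g x) with (((g y - g x) / (y - x) - l + l) * (y - x)) by (field; auto).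
  rewrite Rabs_mult.
  assert (Habs : Rabs ((g y - g x) / (y - x) - l + l) <= Rabs l + 1).
  { eapply Rle_trans; [apply Rabs_triang|]. lra. }
  apply Rle_lt_trans with ((Rabs l + 1) * Rabs (y - x)).
  { apply Rmult_le_compat_r; auto. apply Rabs_pos. }
  apply Rmult_lt_reg_l with (/ (Rabs l + 1)). apply Rinv_0_lt_compat; auto.
  rewrite <- Rmult_assoc, Rinv_l by lra. rewrite Rmult_1_l.
  unfold Rdiv in Hy2. rewrite Rmult_comm. auto.
Qed.

Lemma rD_plus a b g h x l m : rD a b g x l -> rD a b h x m ->
  rD a b (fun y => g y + h y) x (l + m).
Proof.
  intros Hg Hh eps He.
  destruct (Hg (eps/2)) as [d1 [Hd1 H1]]; [lra|].
  destruct (Hh (eps/2)) as [d2 [Hd2 H2]]; [lra|].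
  exists (Rmin d1 d2); split; [apply Rmin_pos; auto|].
  intros y Hy Hne Hyd.
  assert (A1 := H1 y Hy Hne (Rlt_le_trans _ _ _ Hyd (Rmin_l _ _))).
  assert (A2 := H2 y Hy Hne (Rlt_le_trans _ _ _ Hyd (Rmin_r _ _))).
  assert (Hyx : y - x <> 0) by lra.
  replace ((g y + h y - (g x + h x)) / (y - x) - (l + m)) with
    (((g y - g x) / (y - x) - l) + ((h y - h x) / (y - x) - m)) by (field; auto).
  eapply Rle_lt_trans; [apply Rabs_triang|]. lra.
Qed.

Lemma rD_mult a b g h x l m : rD a b g x l -> rD a b h x m ->
  rD a b (fun y => g y * h y) x (l * h x + g x * m).
Proof.
  intros Hg Hh eps He.
  set (K := Rabs (h x) + 1). set (L := Rabs l + 1). set (G := Rabs (g x) + 1).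
  assert (HK : 0 < K) by (unfold K; generalize (Rabs_pos (h x)); lra).
  assert (HL : 0 < L) by (unfold L; generalize (Rabs_pos l); lra).
  assert (HG : 0 < G) by (unfold G; generalize (Rabs_pos (g x)); lra).
  destruct (Hg (eps / (3 * K))) as [d1 [Hd1 H1]].
  { apply Rdiv_lt_0_compat; lra. }
  destruct (rD_cont _ _ _ _ _ Hh (Rmin 1 (eps / (3 * L)))) as [d2 [Hd2 H2]].
  { apply Rmin_pos; [lra|apply Rdiv_lt_0_compat; lra]. }
  destruct (Hh (eps / (3 * G))) as [d3 [Hd3 H3]].
  { apply Rdiv_lt_0_compat; lra. }
  exists (Rmin d1 (Rmin d2 d3)); split.
  { repeat apply Rmin_pos; auto. }
  intros y Hy Hne Hyd.
  assert (A1 := H1 y Hy Hne (Rlt_le_trans _ _ _ Hyd (Rmin_l _ _))).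
  assert (Hyd' := Rlt_le_trans _ _ _ Hyd (Rmin_r _ _)).
  assert (A2 := H2 y Hy (Rlt_le_trans _ _ _ Hyd' (Rmin_l _ _))).
  assert (A3 := H3 y Hy Hne (Rlt_le_trans _ _ _ Hyd' (Rmin_r _ _))).
  assert (Hyx : y - x <> 0) by lra.
  replace ((g y * h y - g x * h x) / (y - x) - (l * h x + g x * m)) with
    (((g y - g x) / (y - x) - l) * h y + l * (h y - h x) + g x * ((h y - h x) / (y - x) - m))
    by (field; auto).
  set (e1 := (g y - g x) / (y - x) - l) in *.
  set (e3 := (h y - h x) / (y - x) - m) in *.
  assert (B2a : Rabs (h y - h x) < 1) by (eapply Rlt_le_trans; [exact A2| apply Rmin_l]).
  assert (B2b : Rabs (h y - h x) < eps / (3 * L)) by (eapply Rlt_le_trans; [exact A2| apply Rmin_r]).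
  assert (Bhy : Rabs (h y) <= K).
  { unfold K. replace (h y) with (h x + (h y - h x)) by ring.
    eapply Rle_trans; [apply Rabs_triang|]. lra. }
  assert (T1 : Rabs (e1 * h y) <= eps / 3).
  { rewrite Rabs_mult. apply Rle_trans with (eps / (3 * K) * K).
    apply Rmult_le_compat; try apply Rabs_pos; lra.
    right; field; lra. }
  assert (T2 : Rabs (l * (h y - h x)) <= eps / 3).
  { rewrite Rabs_mult. apply Rle_trans with (L * (eps / (3 * L))).
    apply Rmult_le_compat; try apply Rabs_pos; [unfold L; lra | lra].
    right; field; lra. }
  assert (T3 : Rabs (g x * e3) < eps / 3).
  { rewrite Rabs_mult. apply Rle_lt_trans with (Rabs (g x) * (eps / (3 * G))).
    apply Rmult_le_compat_l; [apply Rabs_pos| lra].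
    apply Rlt_le_trans with (G * (eps / (3 * G))).
    apply Rmult_lt_compat_r. apply Rdiv_lt_0_compat; lra. unfold G; lra.
    right; field; lra. }
  eapply Rle_lt_trans; [apply Rabs_triang|].
  assert (T4 := Rabs_triang (e1 * h y) (l * (h y - h x))). lra.
Qed.

Lemma rD_dpl a b g x l : derivable_pt_lim g x l -> rD a b g x l.
Proof.
  intros H eps He. destruct (H eps He) as [[d Hd] Hh].
  exists d; split; auto. intros y _ Hne Hyd.
  assert (Hh' := Hh (y - x) ltac:(lra) Hyd). simpl in Hh'.
  replace (x + (y - x)) with y in Hh' by ring. exact Hh'.
Qed.

Lemma rD_interior a b g x l : a < x < b -> rD a b g x l -> derivable_pt_lim g x l.
Proof.
  intros Hx H eps He. destruct (H eps He) as [d [Hd Hy]].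
  assert (Hd' : 0 < Rmin d (Rmin (x - a) (b - x))) by (repeat apply Rmin_pos; lra).
  exists (mkposreal _ Hd'). intros h Hh Hhd. simpl in Hhd.
  assert (E1 := Rle_trans _ _ _ (Rlt_le _ _ Hhd) (Rmin_l _ _)).
  assert (E2 := Rle_trans _ _ _ (Rlt_le _ _ Hhd) (Rmin_r _ _)).
  assert (E3 := Rmin_l (x - a) (b - x)). assert (E4 := Rmin_r (x - a) (b - x)).
  assert (Hy' := Hy (x + h)). replace (x + h - x) with h in Hy' by ring.
  apply Hy'.
  - destruct (Rabs_def2 h (Rmin (x-a) (b-x))) as [F1 F2].
    { apply Rlt_le_trans with (Rmin d (Rmin (x - a) (b - x))); auto. apply Rmin_r. }
    lra.
  - lra.
  - apply Rlt_le_trans with (Rmin d (Rmin (x - a) (b - x))); auto. apply Rmin_l.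
Qed.

Definition clamp (u v y : R) := Rmax u (Rmin v y).

Lemma clamp_in u v y : u <= v -> u <= clamp u v y <= v.
Proof. unfold clamp, Rmax, Rmin; intros; repeat destruct Rle_dec; lra. Qed.

Lemma clamp_id u v y : u <= y <= v -> clamp u v y = y.
Proof. unfold clamp, Rmax, Rmin; intros; repeat destruct Rle_dec; lra. Qed.

Lemma clamp_dist u v y c : u <= c <= v -> Rabs (clamp u v y - c) <= Rabs (y - c).
Proof.
  unfold clamp, Rmax, Rmin; intros; unfold Rabs;
  repeat (destruct Rle_dec || destruct Rcase_abs); lra.
Qed.

Lemma mvt a b g g' u v : a <= u -> u <= v -> v <= b ->
  (forall y, u <= y <= v -> rD a b g y (g' y)) ->
  exists c, u <= c <= v /\ g v - g u = g' c * (v - u).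
Proof.
  intros Hau Huv Hvb Hd.
  destruct (Req_dec u v) as [<-|Hne].
  { exists u; split; [lra| ring]. }
  set (G := fun y => g (clamp u v y)).
  assert (Hmin : Rmin u v = u) by (apply Rmin_left; lra).
  assert (Hmax : Rmax u v = v) by (apply Rmax_right; lra).
  destruct (MVT_gen G u v g') as [c [Hc Heq]].
  - rewrite Hmin, Hmax. intros c Hc.
    apply is_derive_ext_loc with g.
    + assert (He : 0 < Rmin (c - u) (v - c)) by (apply Rmin_pos; lra).
      exists (mkposreal _ He). intros y Hy.
      unfold ball in Hy; simpl in Hy; unfold AbsRing_ball, abs, minus, plus, opp in Hy; simpl in Hy.
      unfold G. rewrite clamp_id; auto.
      destruct (Rabs_def2 _ _ Hy). assert (E3 := Rmin_l (c - u) (v - c)).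
      assert (E4 := Rmin_r (c - u) (v - c)). lra.
    + apply is_derive_Reals. apply rD_interior with a b; [lra|]. apply Hd; lra.
  - rewrite Hmin, Hmax. intros c Hc.
    intros eps He. destruct (rD_cont _ _ _ _ _ (Hd c Hc) eps He) as [d [Hd0 Hy]].
    exists d; split; auto. intros y [_ Hyd]. simpl in *. unfold R_dist in *.
    unfold G. rewrite (clamp_id u v c Hc).
    apply Hy.
    + assert (HH := clamp_in u v y ltac:(lra)). lra.
    + eapply Rle_lt_trans; [apply clamp_dist; auto| exact Hyd].
  - rewrite Hmin, Hmax in Hc. exists c; split; auto.
    unfold G in Heq. rewrite !clamp_id in Heq by lra. exact Heq.
Qed.

Lemma mono_le a b g g' u v K : a <= u -> u <= v -> v <= b ->
  (forall y, u <= y <= v -> rD a b g y (g' y)) ->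
  (forall y, u <= y <= v -> g' y <= K) -> g v - g u <= K * (v - u).
Proof.
  intros H1 H2 H3 Hd HK. destruct (mvt a b g g' u v H1 H2 H3 Hd) as [c [Hc ->]].
  apply Rmult_le_compat_r; [lra| auto].
Qed.

Lemma mono_ge a b g g' u v K : a <= u -> u <= v -> v <= b ->
  (forall y, u <= y <= v -> rD a b g y (g' y)) ->
  (forall y, u <= y <= v -> K <= g' y) -> K * (v - u) <= g v - g u.
Proof.
  intros H1 H2 H3 Hd HK. destruct (mvt a b g g' u v H1 H2 H3 Hd) as [c [Hc ->]].
  apply Rmult_le_compat_r; [lra| auto].
Qed.

Lemma diff_bound a b g g' x0 x B : a <= x0 <= b -> a <= x <= b ->
  (forall y, Rmin x0 x <= y <= Rmax x0 x -> rD a b g y (g' y)) ->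
  (forall y, Rmin x0 x <= y <= Rmax x0 x -> Rabs (g' y) <= B) ->
  Rabs (g x - g x0) <= B * Rabs (x - x0).
Proof.
  intros H0 H1 Hd HB.
  destruct (Rle_dec x0 x) as [Hle|Hlt].
  - rewrite Rmin_left, Rmax_right in * by lra.
    assert (U := mono_le a b g g' x0 x B ltac:(lra) Hle ltac:(lra) Hd
      (fun y Hy => Rle_trans _ _ _ (Rle_abs _) (HB y Hy))).
    assert (L := mono_ge a b g g' x0 x (-B) ltac:(lra) Hle ltac:(lra) Hd
      (fun y Hy => proj1 (proj1 (Rabs_le_between _ _) (HB y Hy)))).
    rewrite (Rabs_right (x - x0)) by lra. apply Rabs_le; lra.
  - rewrite Rmin_right, Rmax_left in * by lra.
    assert (U := mono_le a b g g' x x0 B ltac:(lra) ltac:(lra) ltac:(lra) Hd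
      (fun y Hy => Rle_trans _ _ _ (Rle_abs _) (HB y Hy))).
    assert (L := mono_ge a b g g' x x0 (-B) ltac:(lra) ltac:(lra) ltac:(lra) Hd
      (fun y Hy => proj1 (proj1 (Rabs_le_between _ _) (HB y Hy)))).
    rewrite (Rabs_left (x - x0)) by lra. apply Rabs_le; lra.
Qed.

Lemma dexp c s : derivable_pt_lim (fun s => exp (- c * s)) s (- c * exp (- c * s)).
Proof. apply is_derive_Reals. auto_derive; auto. ring. Qed.

Lemma gronwall d h l c : 0 <= d ->
  (forall s, 0 <= s <= d -> rD 0 d h s (l s)) ->
  (forall s, 0 <= s <= d -> l s <= c * h s) ->
  forall t, 0 <= t <= d -> h t <= h 0 * exp (c * t).
Proof.
  intros Hd HD Hl t Ht.
  assert (M := mono_le 0 d (fun s => h s * exp (- c * s))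
    (fun s => l s * exp (- c * s) + h s * (- c * exp (- c * s))) 0 t 0
    ltac:(lra) ltac:(lra) ltac:(lra)
    (fun y Hy => rD_mult _ _ _ _ _ _ _ (HD y ltac:(lra)) (rD_dpl _ _ _ _ _ (dexp c y)))).
  simpl in M.
  assert (M' : h t * exp (- c * t) <= h 0 * exp (- c * 0)).
  { apply Rminus_le. eapply Rle_trans; [apply M|right; ring].
    intros y Hy. assert (E := exp_pos (- c * y)). assert (L := Hl y ltac:(lra)).
    nra. }
  replace (- c * 0) with 0 in M' by ring. rewrite exp_0, Rmult_1_r in M'.
  replace (h t) with (h t * exp (- c * t) * exp (c * t)).
  - apply Rmult_le_compat_r; [apply Rlt_le, exp_pos| auto].
  - rewrite Rmult_assoc, <- exp_plus. replace (- c * t + c * t) with 0 by ring.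
    rewrite exp_0; ring.
Qed.

Lemma cm (z : C) : Cmod z ^ 2 = fst z ^ 2 + snd z ^ 2 /\ 0 <= Cmod z.
Proof. unfold Cmod. split. apply pow2_sqrt. nra. apply sqrt_pos. Qed.

Lemma key_id a1 b1 (m1 : C) (f f1 f2 ft : C) :
  (Ci * ft + NL a1 b1 m1 f f1 f2)%C = 0%C ->
  fst f * fst ft + snd f * snd ft =
  - ((fst f ^ 2 + snd f ^ 2) * (fst f * snd f2 - snd f * fst f2)
     + 2 * b1 * (fst f * fst f1 + snd f * snd f1) * (fst f * snd f1 - snd f * fst f1)
     + snd m1 * (fst f ^ 2 + snd f ^ 2) ^ 2).
Proof.
  unfold NL. rewrite (proj1 (cm f)), (proj1 (cm f1)).
  destruct f as [p q], f1 as [p1 q1], f2 as [p2 q2], ft as [u v], m1 as [m n].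
  unfold Ci, Cmult, Cplus, Cconj, RtoC; simpl. intros H.
  injection H as H1 H2. nra.
Qed.

Lemma rD_ext a b g h x l m : (forall y, g y = h y) -> l = m -> rD a b g x l -> rD a b h x m.
Proof.
  intros E <- H eps He. destruct (H eps He) as [d [Hd Hy]]. exists d; split; auto.
  intros y H1 H2 H3. rewrite <- !E. auto.
Qed.

Lemma dlin y : derivable_pt_lim (fun y => -1 * y) y (-1).
Proof. apply is_derive_Reals. auto_derive; auto. ring. Qed.

Lemma comp_R x1 P P1 P2 M x : 0 < x1 ->
  (forall y, -x1 <= y <= x1 -> rD (-x1) x1 P y (P1 y) /\ rD (-x1) x1 P1 y (P2 y)) ->
  (forall y, -x1 <= y <= x1 -> Rabs (P2 y) <= M) ->
  P 0 = 0 -> -x1 <= x <= x1 ->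
  Rabs (P x - x * P1 x) <= M * x ^ 2.
Proof.
  intros Hx1 HD HB H0 Hx.
  assert (Hmm : forall y, Rmin 0 x <= y <= Rmax 0 x -> -x1 <= y <= x1).
  { intros y Hy. unfold Rmin, Rmax in Hy. destruct Rle_dec in Hy; lra. }
  assert (Hyx : forall y, Rmin 0 x <= y <= Rmax 0 x -> Rabs y <= Rabs x).
  { intros y Hy. unfold Rmin, Rmax in Hy. unfold Rabs. destruct Rle_dec in Hy;
    repeat destruct Rcase_abs; lra. }
  assert (D := diff_bound (-x1) x1 (fun y => P y + (-1 * y) * P1 y)
    (fun y => P1 y + (-1 * P1 y + (-1 * y) * P2 y)) 0 x (M * Rabs x) ltac:(lra) Hx).
  simpl in D.
  assert (E : Rabs (P x + -1 * x * P1 x - (P 0 + -1 * 0 * P1 0)) <= M * Rabs x * Rabs (x - 0)).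
  { apply D.
    - intros y Hy. apply rD_plus. apply (HD y (Hmm y Hy)).
      apply rD_mult. apply rD_dpl, dlin. apply (HD y (Hmm y Hy)).
    - intros y Hy. replace (P1 y + (-1 * P1 y + -1 * y * P2 y)) with (- (y * P2 y)) by ring.
      rewrite Rabs_Ropp, Rabs_mult.
      assert (Hy1 := Hyx y Hy). assert (Hy2 := HB y (Hmm y Hy)).
      assert (0 <= Rabs y) by apply Rabs_pos. assert (0 <= Rabs (P2 y)) by apply Rabs_pos.
      nra. }
  rewrite H0 in E. replace (P x + -1 * x * P1 x - (0 + -1 * 0 * P1 0)) with (P x - x * P1 x) in E by ring.
  replace (x - 0) with x in E by ring.
  replace (M * x ^ 2) with (M * Rabs x * Rabs x); auto.
  rewrite Rmult_assoc, <- Rabs_mult. rewrite Rabs_right. ring. nra.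
Qed.

Lemma lower x1 P P1 P2 S a x : 0 < x1 ->
  (forall y, -x1 <= y <= x1 -> rD (-x1) x1 P y (P1 y) /\ rD (-x1) x1 P1 y (P2 y)) ->
  (forall y, -x1 <= y <= x1 -> Rabs (P2 y) <= S) ->
  P 0 = 0 -> P1 0 = a -> 0 < a -> S * x1 < a / 2 -> -x1 <= x <= x1 ->
  a * Rabs x / 2 <= Rabs (P x).
Proof.
  intros Hx1 HD HB H0 H1 Ha HS Hx.
  assert (S0 : 0 <= S) by (eapply Rle_trans; [apply Rabs_pos| apply (HB 0); lra]).
  assert (Hp1 : forall y, -x1 <= y <= x1 -> a / 2 <= P1 y).
  { intros y Hy.
    assert (D := diff_bound (-x1) x1 P1 P2 0 y S ltac:(lra) Hy).
    assert (Hmm : forall z, Rmin 0 y <= z <= Rmax 0 y -> -x1 <= z <= x1).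
    { intros z Hz. unfold Rmin, Rmax in Hz. destruct Rle_dec in Hz; lra. }
    assert (E : Rabs (P1 y - P1 0) <= S * Rabs (y - 0)).
    { apply D. intros z Hz; apply (HD z (Hmm z Hz)). intros z Hz; apply (HB z (Hmm z Hz)). }
    rewrite H1 in E. replace (y - 0) with y in E by ring.
    assert (Rabs y <= x1) by (apply Rabs_le; lra).
    assert (S * Rabs y <= S * x1) by (apply Rmult_le_compat_l; auto).
    destruct (Rabs_le_between (P1 y - a) (S * Rabs y)) as [E1 _]. specialize (E1 E). lra. }
  destruct (Rle_dec 0 x) as [Hle|Hlt].
  - assert (G := mono_ge (-x1) x1 P P1 0 x (a/2) ltac:(lra) Hle ltac:(lra)
      (fun y Hy => proj1 (HD y ltac:(lra))) (fun y Hy => Hp1 y ltac:(lra))).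
    rewrite H0 in G. rewrite (Rabs_right x) by lra. rewrite Rabs_right; nra.
  - assert (G := mono_ge (-x1) x1 P P1 x 0 (a/2) ltac:(lra) ltac:(lra) ltac:(lra)
      (fun y Hy => proj1 (HD y ltac:(lra))) (fun y Hy => Hp1 y ltac:(lra))).
    rewrite H0 in G. rewrite (Rabs_left x) by lra. rewrite Rabs_left1; nra.
Qed.

Lemma exp_mono x y : x <= y -> exp x <= exp y.
Proof. intros [H| ->]; [left; apply exp_increasing; auto| right; auto]. Qed.

Lemma cs1 (z w : C) : Rabs (fst z * snd w - snd z * fst w) <= Cmod z * Cmod w.
Proof.
  destruct (cm z) as [Ez Pz]. destruct (cm w) as [Ew Pw].
  assert (Hp : 0 <= Cmod z * Cmod w) by nra.
  assert (Hsq : (fst z * snd w - snd z * fst w) ^ 2 <= (Cmod z * Cmod w) ^ 2).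
  { rewrite Rpow_mult_distr, Ez, Ew.
    assert (H0 := pow2_ge_0 (fst z * fst w + snd z * snd w)). nra. }
  apply Rabs_le. split; nra.
Qed.

Lemma cs2 (z w : C) : Rabs (fst z * fst w + snd z * snd w) <= Cmod z * Cmod w.
Proof.
  destruct (cm z) as [Ez Pz]. destruct (cm w) as [Ew Pw].
  assert (Hp : 0 <= Cmod z * Cmod w) by nra.
  assert (Hsq : (fst z * fst w + snd z * snd w) ^ 2 <= (Cmod z * Cmod w) ^ 2).
  { rewrite Rpow_mult_distr, Ez, Ew.
    assert (H0 := pow2_ge_0 (fst z * snd w - snd z * fst w)). nra. }
  apply Rabs_le. split; nra.
Qed.

Lemma time_rD d (g : R -> C) t l :
  @has_deriv_within (prod_NormedModule R_AbsRing R_NormedModule R_NormedModule) 0 d g t l ->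
  rD 0 d (fun s => Cmod (g s) ^ 2) t (2 * (fst (g t) * fst l + snd (g t) * snd l)).
Proof.
  intros H. destruct (hdw_fst _ _ _ _ _ H) as [H1 H2].
  eapply rD_ext; [| | apply (rD_plus _ _ _ _ _ _ _ (rD_mult _ _ _ _ _ _ _ H1 H1) (rD_mult _ _ _ _ _ _ _ H2 H2))].
  - intros y. simpl. assert (HH := proj1 (cm (g y))). simpl in HH. rewrite HH. ring.
  - ring.
Qed.

Lemma lbound b1 (m1 : C) (f f1 f2 ft : C) M :
  fst f * fst ft + snd f * snd ft =
  - ((fst f ^ 2 + snd f ^ 2) * (fst f * snd f2 - snd f * fst f2)
     + 2 * b1 * (fst f * fst f1 + snd f * snd f1) * (fst f * snd f1 - snd f * fst f1)
     + snd m1 * (fst f ^ 2 + snd f ^ 2) ^ 2) ->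
  Cmod f <= M -> Cmod f1 <= M -> Cmod f2 <= M ->
  Rabs (2 * (fst f * fst ft + snd f * snd ft)) <=
    2 * (1 + Rabs (snd m1)) * M * Cmod f ^ 3
    + 4 * Rabs b1 * M * Cmod f * Rabs (fst f * snd f1 - snd f * fst f1).
Proof.
  intros E Hf Hf1 Hf2. rewrite E.
  destruct (cm f) as [Ef Pf].
  rewrite <- Ef.
  set (r := Cmod f) in *.
  set (X := fst f * snd f2 - snd f * fst f2).
  set (Y := fst f * fst f1 + snd f * snd f1).
  set (Z := fst f * snd f1 - snd f * fst f1).
  assert (HX : Rabs X <= r * M).
  { eapply Rle_trans; [apply cs1|]. apply Rmult_le_compat_l; auto. }
  assert (HY : Rabs Y <= r * M).
  { eapply Rle_trans; [apply cs2|]. apply Rmult_le_compat_l; auto. }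
  assert (T1 : Rabs (r ^ 2 * X) <= M * r ^ 3).
  { rewrite Rabs_mult, Rabs_right by nra. assert (0 <= r^2) by nra. nra. }
  assert (T2 : Rabs (2 * b1 * Y * Z) <= 2 * Rabs b1 * (r * M) * Rabs Z).
  { rewrite !Rabs_mult. rewrite (Rabs_right 2) by lra.
    assert (0 <= Rabs b1) by apply Rabs_pos. assert (0 <= Rabs Z) by apply Rabs_pos.
    apply Rmult_le_compat_r; auto. apply Rmult_le_compat_l; nra. }
  assert (T3 : Rabs (snd m1 * (r ^ 2) ^ 2) <= Rabs (snd m1) * M * r ^ 3).
  { rewrite Rabs_mult, (Rabs_right ((r^2)^2)) by nra.
    assert (0 <= Rabs (snd m1)) by apply Rabs_pos.
    rewrite Rmult_assoc. apply Rmult_le_compat_l; auto. assert (0 <= r^3) by (apply pow_le; auto). nra. }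
  rewrite Rabs_mult, Rabs_Ropp, (Rabs_right 2) by lra.
  assert (T := Rabs_triang (r ^ 2 * X + 2 * b1 * Y * Z) (snd m1 * (r ^ 2) ^ 2)).
  assert (T' := Rabs_triang (r ^ 2 * X) (2 * b1 * Y * Z)).
  nra.
Qed.

Lemma fst_le (z : C) : Rabs (fst z) <= Cmod z.
Proof. destruct (cm z) as [E P]. apply Rabs_le; split; nra. Qed.
Lemma snd_le (z : C) : Rabs (snd z) <= Cmod z.
Proof. destruct (cm z) as [E P]. apply Rabs_le; split; nra. Qed.


(* f t x = f(t,x); f1, f2, f3 = d_x f, d_x^2 f, d_x^3 f; ft = d_t f. *)
Theorem proposition2p6 (alpha1 beta1 : R) (mu1 : C) :
  exists C0 : R, 0 < C0 /\
  forall (x1 delta : R) (f f1 f2 f3 ft : R -> R -> C) (M : R),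
    0 < x1 -> x1 < 1 -> 0 < delta ->
    (* f(t,.) in C^{3,1}([-x1,x1]) for each t in [0,delta] *)
    (forall t x, 0 <= t <= delta -> -x1 <= x <= x1 ->
       has_deriv_within (-x1) x1 (f t) x (f1 t x) /\
       has_deriv_within (-x1) x1 (f1 t) x (f2 t x) /\
       has_deriv_within (-x1) x1 (f2 t) x (f3 t x)) ->
    (* M bounds the L^infty([0,delta]; C^{3,1}) norm of f *)
    (forall t x y, 0 <= t <= delta -> -x1 <= x <= x1 -> -x1 <= y <= x1 ->
       Cmod (f t x) <= M /\ Cmod (f1 t x) <= M /\ Cmod (f2 t x) <= M /\
       Cmod (f3 t x) <= M /\ Cmod (minus (f3 t x) (f3 t y)) <= M * Rabs (x - y)) ->
    (* f solves ( * ) *)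
    (forall t x, 0 <= t <= delta -> -x1 <= x <= x1 ->
       has_deriv_within 0 delta (fun s => f s x) t (ft t x) /\
       (Ci * ft t x + NL alpha1 beta1 mu1 (f t x) (f1 t x) (f2 t x))%C = 0%C) ->
    f 0 0 = 0%C ->
    Im (f1 0 0) = 0 -> 0 < Re (f1 0 0) ->
    (exists S, (forall x, -x1 <= x <= x1 -> Cmod (f2 0 x) <= S) /\
               S * x1 < Re (f1 0 0) / 2) ->
    forall t x, 0 <= t <= delta -> -x1 <= x <= x1 ->
      Cmod (f t x) <= Cmod (f 0 x) * exp (C0 * M ^ 2 * t) /\
      exists l : R,
        has_deriv_within 0 delta (fun s => Cmod (f s x) ^ 2) t l /\
        Rabs l <= C0 * M * exp (C0 * M ^ 2 * delta)
                  * (1 + / Re (f1 0 0) * M) ^ 3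
                  * (Cmod (f 0 x) ^ 3 + t * M ^ 3 * Cmod (f 0 x) ^ 2).
Proof.
  set (bb := Rabs beta1). set (nn := Rabs (snd mu1)).
  assert (Hbb : 0 <= bb) by apply Rabs_pos. assert (Hnn : 0 <= nn) by apply Rabs_pos.
  exists (6 + 40 * bb + 6 * nn). split; [lra|].
  intros x1 delta f f1 f2 f3 ft M Hx1 Hx1' Hd Hsp Hbd Heq H00 Him Hre [S [HS HSx]] t x Ht Hx.
  set (C0 := 6 + 40 * bb + 6 * nn).
  assert (HM : 0 <= M).
  { destruct (Hbd 0 0 0 ltac:(lra) ltac:(lra) ltac:(lra)) as [H _].
    eapply Rle_trans; [apply (proj2 (cm (f 0 0)))| exact H]. }
  set (K := 2 + 4 * bb + 2 * nn).
  set (Z := fun s y => fst (f s y) * snd (f1 s y) - snd (f s y) * fst (f1 s y)).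
  assert (Hl : forall y s, -x1 <= y <= x1 -> 0 <= s <= delta ->
    Rabs (2 * (fst (f s y) * fst (ft s y) + snd (f s y) * snd (ft s y))) <=
    2 * (1 + nn) * M * Cmod (f s y) ^ 3 + 4 * bb * M * Cmod (f s y) * Rabs (Z s y)).
  { intros y s Hy Hs. destruct (Hbd s y y Hs Hy Hy) as [B0 [B1 [B2 _]]].
    apply (lbound beta1 mu1 (f s y) (f1 s y) (f2 s y) (ft s y) M); auto. eapply key_id. apply (Heq s y Hs Hy). }
  assert (Hgr : forall y s, -x1 <= y <= x1 -> 0 <= s <= delta ->
    Cmod (f s y) <= Cmod (f 0 y) * exp (K / 2 * M ^ 2 * s)).
  { intros y s Hy Hs.
    assert (G := gronwall delta (fun s => Cmod (f s y) ^ 2)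
      (fun s => 2 * (fst (f s y) * fst (ft s y) + snd (f s y) * snd (ft s y))) (K * M ^ 2)
      ltac:(lra)).
    assert (G' : Cmod (f s y) ^ 2 <= Cmod (f 0 y) ^ 2 * exp (K * M ^ 2 * s)).
    { apply G; auto.
      - intros s' Hs'. apply (time_rD delta (fun s => f s y) s' (ft s' y)). apply (Heq s' y Hs' Hy).
      - intros s' Hs'. simpl.
        assert (L := Hl y s' Hy Hs').
        destruct (Hbd s' y y Hs' Hy Hy) as [B0 [B1 [B2 _]]].
        assert (HZ : Rabs (Z s' y) <= Cmod (f s' y) * M).
        { unfold Z. eapply Rle_trans; [apply cs1|]. apply Rmult_le_compat_l; auto. apply cm. }
        set (r := Cmod (f s' y)) in *. assert (Hr : 0 <= r) by apply cm.
        assert (A1 := Rle_abs (2 * (fst (f s' y) * fst (ft s' y) + snd (f s' y) * snd (ft s' y)))).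
        assert (A2 : 2 * (1 + nn) * M * r ^ 3 <= 2 * (1 + nn) * M * M * r ^ 2).
        { assert (0 <= r^2) by nra. assert (0 <= 2*(1+nn)*M) by nra.
          assert (0 <= 2 * (1 + nn) * M * r ^ 2) by (apply Rmult_le_pos; auto). nra. }
        assert (A3 : 4 * bb * M * r * Rabs (Z s' y) <= 4 * bb * M * r * (r * M)).
        { apply Rmult_le_compat_l; auto. assert (0 <= bb * M) by nra. nra. }
        unfold K. nra. }
    assert (Ee : exp (K * M ^ 2 * s) = exp (K / 2 * M ^ 2 * s) * exp (K / 2 * M ^ 2 * s)).
    { rewrite <- exp_plus. f_equal. field. }
    rewrite Ee in G'. assert (P1 := exp_pos (K / 2 * M ^ 2 * s)).
    assert (P2 := proj2 (cm (f s y))). assert (P3 := proj2 (cm (f 0 y))).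
    set (e := exp (K / 2 * M ^ 2 * s)) in *.
    assert (P4 : 0 <= Cmod (f 0 y) * e) by nra.
    nra. }
  assert (Hz0 : forall s, 0 <= s <= delta -> f s 0 = 0%C).
  { intros s Hs. apply Cmod_eq_0. assert (G := Hgr 0 s ltac:(lra) Hs).
    rewrite H00, Cmod_0, Rmult_0_l in G. assert (G2 := proj2 (cm (f s 0))). lra. }
  assert (HZ : Rabs (Z t x) <= 2 * M ^ 2 * x ^ 2).
  { assert (HD : forall y, -x1 <= y <= x1 ->
      (rD (-x1) x1 (fun y => fst (f t y)) y (fst (f1 t y)) /\ rD (-x1) x1 (fun y => fst (f1 t y)) y (fst (f2 t y))) /\
      (rD (-x1) x1 (fun y => snd (f t y)) y (snd (f1 t y)) /\ rD (-x1) x1 (fun y => snd (f1 t y)) y (snd (f2 t y)))).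
    { intros y Hy. destruct (Hsp t y Ht Hy) as [D1 [D2 _]].
      destruct (hdw_fst _ _ _ _ _ D1). destruct (hdw_fst _ _ _ _ _ D2). tauto. }
    assert (R1 := comp_R x1 (fun y => fst (f t y)) (fun y => fst (f1 t y)) (fun y => fst (f2 t y)) M x Hx1
      (fun y Hy => proj1 (HD y Hy))
      (fun y Hy => Rle_trans _ _ _ (fst_le _) (proj1 (proj2 (proj2 (Hbd t y y Ht Hy Hy)))))
      ltac:(simpl; rewrite (Hz0 t Ht); reflexivity) Hx).
    assert (R2 := comp_R x1 (fun y => snd (f t y)) (fun y => snd (f1 t y)) (fun y => snd (f2 t y)) M x Hx1
      (fun y Hy => proj2 (HD y Hy))
      (fun y Hy => Rle_trans _ _ _ (snd_le _) (proj1 (proj2 (proj2 (Hbd t y y Ht Hy Hy)))))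
      ltac:(simpl; rewrite (Hz0 t Ht); reflexivity) Hx).
    simpl in R1, R2.
    destruct (Hbd t x x Ht Hx Hx) as [_ [B1 _]].
    assert (Q1 := Rle_trans _ _ _ (fst_le (f1 t x)) B1).
    assert (Q2 := Rle_trans _ _ _ (snd_le (f1 t x)) B1).
    unfold Z.
    replace (fst (f t x) * snd (f1 t x) - snd (f t x) * fst (f1 t x)) with
      ((fst (f t x) - x * fst (f1 t x)) * snd (f1 t x) - (snd (f t x) - x * snd (f1 t x)) * fst (f1 t x)) by ring.
    eapply Rle_trans; [apply Rabs_triang|]. rewrite Rabs_Ropp, !Rabs_mult.
    assert (0 <= M * x ^ 2) by (apply Rmult_le_pos; auto; apply pow2_ge_0).
    assert (0 <= Rabs (fst (f t x) - x * fst (f1 t x))) by apply Rabs_pos.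
    assert (0 <= Rabs (snd (f t x) - x * snd (f1 t x))) by apply Rabs_pos.
    assert (0 <= Rabs (snd (f1 t x))) by apply Rabs_pos.
    assert (0 <= Rabs (fst (f1 t x))) by apply Rabs_pos.
    nra. }
  set (a := Re (f1 0 0)).
  assert (Hlow : a * Rabs x / 2 <= Cmod (f 0 x)).
  { eapply Rle_trans; [| apply fst_le].
    apply (lower x1 (fun y => fst (f 0 y)) (fun y => fst (f1 0 y)) (fun y => fst (f2 0 y)) S a x Hx1); auto.
    - intros y Hy. destruct (Hsp 0 y ltac:(lra) Hy) as [D1 [D2 _]].
      destruct (hdw_fst _ _ _ _ _ D1). destruct (hdw_fst _ _ _ _ _ D2). tauto.
    - intros y Hy. eapply Rle_trans; [apply fst_le| apply HS; auto].
    - simpl. rewrite H00. reflexivity. }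
  assert (Hr := Hgr x t Hx Ht).
  assert (Hr0 := proj2 (cm (f 0 x))). assert (Hrr := proj2 (cm (f t x))).
  set (r := Cmod (f t x)) in *. set (r0 := Cmod (f 0 x)) in *.
  set (e := exp (K / 2 * M ^ 2 * t)) in *.
  assert (HM2 : 0 <= M ^ 2) by apply pow2_ge_0.
  assert (HKC : K / 2 <= C0) by (unfold K, C0; lra).
  assert (HK3 : 3 * (K / 2) <= C0) by (unfold K, C0; lra).
  assert (HKp : 0 <= K) by (unfold K; lra).
  assert (Hep : 0 < e) by apply exp_pos.
  split.
  { eapply Rle_trans; [exact Hr|]. apply Rmult_le_compat_l; auto. apply exp_mono.
    assert (0 <= M ^ 2 * t) by nra. nra. }
  exists (2 * (fst (f t x) * fst (ft t x) + snd (f t x) * snd (ft t x))). split.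
  { apply rD_hdw. apply (time_rD delta (fun s => f s x) t (ft t x)). apply Heq; auto. }
  set (E := exp (C0 * M ^ 2 * delta)).
  assert (HEp : 0 < E) by apply exp_pos.
  assert (He1 : e <= E).
  { apply exp_mono. assert (0 <= M ^ 2 * t) by nra. assert (M ^ 2 * t <= M ^ 2 * delta) by nra. nra. }
  assert (He3 : e ^ 3 <= E).
  { replace (e ^ 3) with (exp (K / 2 * M ^ 2 * t + K / 2 * M ^ 2 * t + K / 2 * M ^ 2 * t)).
    - apply exp_mono. assert (0 <= M ^ 2 * t) by nra. assert (M ^ 2 * t <= M ^ 2 * delta) by nra. nra.
    - rewrite !exp_plus. unfold e. ring. }
  assert (Hr3 : r ^ 3 <= r0 ^ 3 * E).
  { apply Rle_trans with ((r0 * e) ^ 3). apply pow_incr; lra.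
    rewrite Rpow_mult_distr. apply Rmult_le_compat_l; auto. apply pow_le; auto. }
  assert (Hr1 : r <= r0 * E).
  { eapply Rle_trans; [exact Hr|]. apply Rmult_le_compat_l; auto. }
  assert (Ha : 0 < a) by exact Hre.
  assert (Hx2 : a ^ 2 * x ^ 2 <= 4 * r0 ^ 2).
  { assert (0 <= a * Rabs x) by (apply Rmult_le_pos; [lra| apply Rabs_pos]).
    assert (Hsq : (a * Rabs x) ^ 2 <= (2 * r0) ^ 2) by (apply pow_incr; lra).
    rewrite Rpow_mult_distr, pow2_abs in Hsq. nra. }
  set (u := / a * M).
  assert (Hu : 0 <= u) by (unfold u; apply Rmult_le_pos; [apply Rlt_le, Rinv_0_lt_compat|]; lra).
  assert (HMu : M = u * a) by (unfold u; field; lra).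
  assert (Hmx : M ^ 2 * x ^ 2 <= 4 * u ^ 2 * r0 ^ 2).
  { rewrite HMu. replace ((u * a) ^ 2 * x ^ 2) with (u ^ 2 * (a ^ 2 * x ^ 2)) by ring.
    assert (0 <= u ^ 2) by apply pow2_ge_0. nra. }
  assert (L := Hl x t Hx Ht).
  assert (HZp : 0 <= Rabs (Z t x)) by apply Rabs_pos.
  assert (S1 : 2 * (1 + nn) * M * r ^ 3 <= 2 * (1 + nn) * M * (r0 ^ 3 * E)).
  { apply Rmult_le_compat_l; auto. nra. }
  assert (S2 : 4 * bb * M * r * Rabs (Z t x) <= 4 * bb * M * (r0 * E) * (2 * (4 * u ^ 2 * r0 ^ 2))).
  { assert (0 <= 4 * bb * M) by nra.
    apply Rmult_le_compat; auto.
    - apply Rmult_le_pos; auto.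
    - apply Rmult_le_compat_l; auto.
    - eapply Rle_trans; [exact HZ|]. nra. }
  assert (Hcub : 1 <= (1 + u) ^ 3 /\ u ^ 2 <= (1 + u) ^ 3).
  { split; nra. }
  assert (S3 : 2 * (1 + nn) * M * (r0 ^ 3 * E) + 4 * bb * M * (r0 * E) * (2 * (4 * u ^ 2 * r0 ^ 2))
     = (2 * (1 + nn) + 32 * bb * u ^ 2) * (M * r0 ^ 3 * E)) by ring.
  assert (HP : 0 <= M * r0 ^ 3 * E).
  { apply Rmult_le_pos; [apply Rmult_le_pos; [auto| apply pow_le; auto]| lra]. }
  assert (S4 : 2 * (1 + nn) + 32 * bb * u ^ 2 <= C0 * (1 + u) ^ 3).
  { assert (0 <= u ^ 2) by apply pow2_ge_0. unfold C0. nra. }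
  assert (S5 : 0 <= C0 * M * E * (1 + u) ^ 3 * (t * M ^ 3 * r0 ^ 2)).
  { assert (0 <= C0) by (unfold C0; lra). assert (0 <= (1 + u) ^ 3) by lra.
    assert (0 <= M ^ 3) by (apply pow_le; auto). assert (0 <= r0 ^ 2) by apply pow2_ge_0.
    assert (0 <= t * M ^ 3 * r0 ^ 2) by (apply Rmult_le_pos; [apply Rmult_le_pos|]; lra).
    assert (0 <= C0 * M * E * (1 + u) ^ 3) by (repeat apply Rmult_le_pos; lra).
    apply Rmult_le_pos; auto. }
  fold u. fold a.
  assert (S6 : (2 * (1 + nn) + 32 * bb * u ^ 2) * (M * r0 ^ 3 * E) <= C0 * (1 + u) ^ 3 * (M * r0 ^ 3 * E)).
  { apply Rmult_le_compat_r; auto. }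
  replace (C0 * M * E * (1 + u) ^ 3 * (r0 ^ 3 + t * M ^ 3 * r0 ^ 2)) with
    (C0 * (1 + u) ^ 3 * (M * r0 ^ 3 * E) + C0 * M * E * (1 + u) ^ 3 * (t * M ^ 3 * r0 ^ 2)) by ring.
  change (Cmod (f t x)) with r in L. lra.
Qed.
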